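(* There is no binary self-orthogonal $[46,6,22]$ code.
   Context: A binary linear code $C$ is self-orthogonal if $C\subseteq C^\perp$. *)

(* Defs.v *)
From HB Require Import structures.
From mathcomp Require Import all_boot all_order all_algebra.
Set Implicit Arguments. Unset Strict Implicit. Unset Printing Implicit Defensive.
Import GRing.Theory.
Local Open Scope ring_scope.

Definition binary_code (n : nat) := {vspace 'rV['F_2]_n}.

Definition wt (n : nat) (v : 'rV['F_2]_n) : nat := #|[set i | v 0 i != 0]|.

Definition dotF2 (n : nat) (u v : 'rV['F_2]_n) : 'F_2 := \sum_(i < n) u 0 i * v 0 i.

Definition in_dual (n : nat) (C : binary_code n) (v : 'rV['F_2]_n) : Prop :=
  forall u, u \in C -> dotF2 u v = 0.

Definition self_orthogonal (n : nat) (C : binary_code n) : Prop :=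
  forall v, v \in C -> in_dual C v.

Definition min_distance (n : nat) (C : binary_code n) (d : nat) : Prop :=
  (exists2 c, c \in C & (c != 0) && (wt c == d)) /\
  (forall c, c \in C -> c != 0 -> (d <= wt c)%N).

Arguments min_distance : clear implicits.

Definition is_nkd_code (n k d : nat) (C : binary_code n) : Prop :=
  \dim C = k /\ min_distance n C d.
Arguments is_nkd_code : clear implicits.

(* Main.v *)
Require Import Defs.
From HB Require Import structures.
From mathcomp Require Import all_boot all_order all_algebra.
From mathcomp Require Import all_field zify.

Set Implicit Arguments. Unset Strict Implicit. Unset Printing Implicit Defensive.
Import GRing.Theory.

Section Aux.
Local Open Scope ring_scope.

Lemma F2_cases (x : 'F_2) : x = 0 \/ x = 1.
Proof. case: x => [[|[|m]] Hm] //=; [left|right]; exact: val_inj. Qed.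
Lemma F2_add (x y : 'F_2) : (x + y != 0) = (x != 0) (+) (y != 0).
Proof. by case: (F2_cases x) => ->; case: (F2_cases y) => ->. Qed.
Lemma F2_mul (x y : 'F_2) : (x * y != 0) = (x != 0) && (y != 0).
Proof. by case: (F2_cases x) => ->; case: (F2_cases y) => ->. Qed.
Lemma F2_natr m : ((m%:R : 'F_2) != 0) = odd m.
Proof. rewrite -(Fp_nat_mod (isT : prime 2)) modn2. by case: (odd m). Qed.

Variable n : nat.
Definition supp (v : 'rV['F_2]_n) := [set i | v 0 i != 0].
Lemma wtE v : wt v = #|supp v|. Proof. by []. Qed.

Lemma supp_add u v : supp (u + v) = (supp u :|: supp v) :\: (supp u :&: supp v).
Proof.
apply/setP => i; rewrite !inE mxE F2_add.
by case: (u 0 i != 0); case: (v 0 i != 0).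
Qed.

Lemma wt_add u v : (wt (u + v) + 2 * #|supp u :&: supp v| = wt u + wt v)%N.
Proof.
rewrite !wtE supp_add cardsD.
have sub : supp u :&: supp v \subset supp u :|: supp v.
  exact: subset_trans (subsetIl _ _) (subsetUl _ _).
rewrite (setIidPr sub) -cardsUI.
have := subset_leq_card sub. lia.
Qed.

Lemma dot_parity u v : (dotF2 u v == 0) = ~~ odd #|supp u :&: supp v|.
Proof.
rewrite /dotF2 (bigID (mem (supp u :&: supp v))) /=.
rewrite [X in _ + X]big1 ?addr0; last first.
  move=> i; rewrite !inE => /negbTE H; apply/eqP; rewrite -[_ == 0]negbK F2_mul H //.
rewrite (eq_bigr (fun _ => 1)); last first.
  move=> i; rewrite !inE -F2_mul => H.
  by case: (F2_cases (u 0 i * v 0 i)) H => ->; rewrite ?eqxx.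
rewrite sumr_const -F2_natr negbK.
by rewrite -[#|_|]/#|mem (supp u :&: supp v)|.
Qed.

End Aux.

Local Open Scope ring_scope.

Theorem proposition6p7 (C : binary_code 46) :
  is_nkd_code 46 6 22 C -> ~ self_orthogonal C.
Proof.
move=> [dimC [_ Hmin]] so.
have inter u v : u \in C -> v \in C -> (2 %| #|supp u :&: supp v|)%N.
  by move=> uC vC; rewrite dvdn2 -dot_parity; apply/eqP; exact: so.
have ev u : u \in C -> (2 %| wt u)%N.
  by move=> uC; have := inter u u uC uC; rewrite setIid.
have key u v : u \in C -> v \in C ->
    ((4 %| wt u) = (4 %| wt v) -> 4 %| wt (u + v))%N.
  move=> uC vC; have h : (wt (u + v) + 2 * #|supp u :&: supp v| = wt u + wt v)%N := wt_add u v.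
  have hk := inter u v uC vC; have hu := ev u uC; have hv := ev v vC.
  case: (boolP (4 %| wt u)%N) => hu4; case: (boolP (4 %| wt v)%N) => hv4 // _; lia.
set CS := [set c | c \in C].
set P := [set c : 'rV['F_2]_46 | (4 %| wt c)%N].
set D := CS :&: P; set N := CS :\: P.
have cardCS : #|CS| = 64%N by rewrite cardsE card_vspace card_Fp // dimC.
have DN : (#|D| + #|N| = 64)%N by rewrite cardsID.
have NleD : (#|N| <= #|D|)%N.
  case: (set_0Vmem N) => [-> | [e He]]; first by rewrite cards0.
  move: He; rewrite !inE => /andP[/negbTE eP eC].
  rewrite -(card_imset N (addIr e)); apply: subset_leq_card.
  apply/subsetP => _ /imsetP[c cN ->].
  move: cN; rewrite !inE => /andP[/negbTE cP cC].
  apply/andP; split; first exact: memvD.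
  by apply: key => //; rewrite cP eP.
have D32 : (32 <= #|D|)%N by lia.
have half (i : 'I_46) : (2 * #|D :&: [set c : 'rV['F_2]_46 | c 0%R i != 0%R]| <= #|D|)%N.
  set Q := [set c : 'rV['F_2]_46 | c 0%R i != 0%R].
  rewrite -[X in (_ <= X)%N](cardsID Q D) mul2n -addnn leq_add2l.
  case: (set_0Vmem (D :&: Q)) => [-> | [d dA]]; first by rewrite cards0.
  rewrite -(card_imset (D :&: Q) (addIr d)); apply: subset_leq_card.
  apply/subsetP => _ /imsetP[c cA ->].
  move: cA dA; rewrite !inE => /andP[/andP[cC cP] ci] /andP[/andP[dC dP] di].
  rewrite mxE F2_add ci di /= memvD //=.
  by apply: key => //; rewrite cP dP.
have wtS (c : 'rV['F_2]_46) : wt c = (\sum_(i < 46) (c 0%R i != 0%R : nat))%N.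
  rewrite wtE /supp -sum1_card big_mkcond /=; apply: eq_bigr => i _.
  by rewrite inE; case: (c 0 i != 0).
have sumwt : (\sum_(c in D) wt c = \sum_(i < 46) #|D :&: [set c : 'rV['F_2]_46 | c 0%R i != 0%R]|)%N.
  rewrite (eq_bigr _ (fun c _ => wtS c)) exchange_big /=; apply: eq_bigr => i _.
  rewrite -sum1_card [RHS]big_mkcond [LHS]big_mkcond; apply: eq_bigr => c _.
  by rewrite !inE; case: (_ && _); case: (c 0%R i != 0%R).
have ub : (2 * \sum_(c in D) wt c <= 46 * #|D|)%N.
  rewrite sumwt big_distrr /=.
  apply: (@leq_trans (\sum_(i < 46) #|D|)).
    by apply: leq_sum => i _; exact: half i.
  by rewrite sum_nat_const card_ord.
have wt0 : wt (0 : 'rV['F_2]_46) = 0%N.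
  rewrite wtE; apply/eqP; rewrite cards_eq0; apply/eqP/setP => i.
  by rewrite !inE mxE eqxx.
have D0 : (0 : 'rV['F_2]_46) \in D by rewrite !inE mem0v wt0 dvdn0.
have e1 : #|D| = (1 + \sum_(c in D | c != 0%R) 1)%N by rewrite -sum1_card (bigD1 (0%R : 'rV['F_2]_46)).
have lb : (24 * \sum_(c in D | c != 0%R) 1 <= \sum_(c in D) wt c)%N.
  rewrite [X in (_ <= X)%N](bigD1 (0%R : 'rV['F_2]_46)) //= big_distrr /=.
  apply: leq_trans (leq_addl _ _) ; apply: leq_sum => c /andP[cD cnz].
  rewrite muln1; move: cD; rewrite !inE => /andP[cC cP].
  have := Hmin c cC cnz; lia.
lia.
Qed.
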